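(* Let $L$ be a framed oriented link in $S^3$ with $n$ components and let $\mathbb D$ be a $(1,1)$-tangle diagram whose closure, with blackboard framing, is $L$, with associated diagram invariant $G_{\mathbb D}$. Then for each $r\geq1$, $$G_{\mathbb D}(r)\in\frac{1}{(q^4x_1^2;q^2)_{r-1}}\prod_{i,j=1}^n z_{ij}^{C_{ij}}\;\mathbb{C}[x_1^{\pm1},\dots,x_n^{\pm1},q^{\pm1}],$$ where $(C_{ij})$ is the linking matrix of $L$ ($C_{ii}$ being the framing of the $i$-th component) and the product runs over ordered pairs $(i,j)$.
   Context: Notation: $(x;p)_k=\prod_{j=0}^{k-1}(1-xp^j)$ for $k>0$, $(x;p)_0=1$, $(x;p)_k=0$ for $k<0$; $\delta_{a,b}=1$ if $a=b$ and $0$ otherwise; $\vartheta_{a\leq b}=1$ if $a\leq b$ and $0$ otherwise. Let $\mathbb V_n=\mathbb{C}(q^{1/2},x_1^{1/2},\dots,x_n^{1/2},\{z_{ij}\}_{i,j=1}^n)$, with $z_{ij}=z_{ji}$, a field of rational functions in formal variables. Diagram invariant: $\mathbb D$ is a diagram of an oriented $(1,1)$-tangle with $n$ components, drawn so that at every crossing both strands run downward; its components are assigned variables $x_1,\dots,x_n$, with $x_1$ on the open component. An arc is a segment of $\mathbb D$ from one crossing (or endpoint) to the next, regardless of over/under; arcs are labeled by integer variables $a_1,\dots,a_m$, with $a_1,a_m$ the arcs at the two open ends. To each building block assign a function of $(a_1,\dots,a_m,r)\in\mathbb{Z}^{m+1}$ with values in $\mathbb V_n$: at a crossing where the strand of component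 $i$ enters along arc $a$ and leaves along arc $c$, and the strand of component $j$ enters along arc $b$ and leaves along arc $d$, a positive crossing contributes $$\delta_{a-c,d-b}\vartheta_{c\leq a}\vartheta_{d\geq b}(-x_i)^{a-c}q^{(c-a)(a+b+1)+2cd}z_{ij}x_i^{-d}x_j^{-c}\frac{(q^{2(a-1)}x_i^{-2};q^{-2})_{a-c}(q^{2(b+1)};q^2)_{a-c}}{(q^{-2};q^{-2})_{a-c}}$$ and a negative crossing contributes $$\delta_{a-c,d-b}\vartheta_{c\leq a}\vartheta_{d\geq b}(-x_i)^{a-c}q^{(c-a)(a+b-1)-2ab}z_{ij}^{-1}x_i^{b}x_j^{a}\frac{(q^{2(a-1)}x_i^{-2};q^{-2})_{a-c}(q^{2(b+1)};q^2)_{a-c}}{(q^{2};q^{2})_{a-c}};$$ a cap (local maximum) on arc $a$ of component $i$ contributes $1$ if it corresponds to the evaluation $V^*\otimes V\to\mathbb{C}$, $f\otimes w\mapsto f(w)$, and $q^{2a(r-1)}x_i^{1-r}$ for the other orientation; a cup (local minimum) on arc $a$ of component $i$ contributes $1$ if it corresponds to the coevaluation $\mathbb{C}\to V\otimes V^*$, and $q^{2a(1-r)}x_i^{r-1}$ for the other orientation. Put $\mathsf d[x_1]=(-x_1)^{r-1}q^{\frac12r(r+1)-1}\frac{1}{(q^4x_1^2;q^2)_{r-1}}$. Let $G^\times_{\mathbb D}(a_1,\dots,a_m;r)$ be the product of $\mathsf d[x_1]$, $\delta_{a_1,0}\delta_{a_m,0}$ and the functions of all crossings, cups and caps, and $G_{\mathbb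 D}(r)=\sum_{(a_1,\dots,a_m)\in[0,r-1]^m}G^\times_{\mathbb D}(a_1,\dots,a_m;r)\in\mathbb V_n$. *)

(* Defs.v *)
From HB Require Import structures.
From mathcomp Require Import all_boot all_algebra.
From mathcomp Require Import Rstruct complex.
From mathcomp Require Import mpoly.
From mathcomp Require Import fraction.
Set Implicit Arguments. Unset Strict Implicit. Unset Printing Implicit Defensive.
Import GRing.Theory.
Local Open Scope ring_scope.
Local Open Scope quotient_scope.

Definition CC : fieldType := complex Rdefinitions.R.

(* Variables: index 0 is q^{1/2}; index 1+i is x_{i+1}^{1/2} (i < n);
   index 1+n+(min i j)*n+(max i j) is z_{ij} = z_{ji}. *)
Definition nvars (n : nat) : nat := (n + n * n).+1.
Definition Vn (n : nat) : fieldType := {fraction {mpoly CC[nvars n]}}.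

Definition var (n k : nat) : Vn n :=
  FracField.tofrac ('X_(inord k) : {mpoly CC[nvars n]}).

Definition qh (n : nat) : Vn n := var n 0.
Definition q (n : nat) : Vn n := qh n ^+ 2.
(* x n i is the variable x_{i+1} (0-based indexing of components). *)
Definition xh (n i : nat) : Vn n := var n i.+1.
Definition x (n i : nat) : Vn n := xh n i ^+ 2.
Definition z (n i j : nat) : Vn n := var n (1 + n + minn i j * n + maxn i j).

Definition poch (F : fieldType) (a p : F) (k : int) : F :=
  match k with
  | Posz k' => \prod_(j < k') (1 - a * p ^+ j)
  | Negz _ => 0
  end.

(* The Laurent polynomial ring C[x_1^{+-1},..,x_n^{+-1},q^{+-1}] inside V_n:
   f = P / (q x_1 ... x_n)^e with P a polynomial in q = (q^{1/2})^2 and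
   x_i = (x_i^{1/2})^2 only. *)
Definition in_qx_polys (n : nat) (P : {mpoly CC[nvars n]}) : Prop :=
  forall m, m \in msupp P ->
    forall k : 'I_(nvars n),
      if (k < n.+1)%N then ~~ odd (m k) else m k == 0%N.

Definition laurent (n : nat) (f : Vn n) : Prop :=
  exists (P : {mpoly CC[nvars n]}) (e : nat),
    in_qx_polys P /\ f = FracField.tofrac P / (q n * \prod_(i < n) x n i) ^+ e.

(* A diagram is a word of elementary events read from top to bottom.
   Between consecutive events there is a horizontal level crossed by
   finitely many strands, numbered 0,1,.. from left to right; each strand
   is oriented downward (true) or upward (false).
   - Xing k s : a crossing of the strands at positions k and k+1, both of
       which must run downward; s = true for a positive crossing, false for
       a negative one.  With both strands downward, in a positive crossing
       the over-strand goes from top-right to bottom-left, in a negative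
       crossing from top-left to bottom-right.
   - Cap k ld : a local maximum creating two new strands at positions k and
       k+1; ld = true iff the left new strand is oriented downward.
   - Cup k    : a local minimum joining the strands at positions k and k+1,
       which must have opposite orientations. *)
Inductive event : Type :=
| Xing of nat & bool
| Cap of nat & bool
| Cup of nat.

Definition ev0 : event := Cup 0.

Definition stepT (st : seq bool) (e : event) : seq bool :=
  match e with
  | Xing _ _ => st
  | Cap k ld => take k st ++ [:: ld; ~~ ld] ++ drop k st
  | Cup k => take k st ++ drop k.+2 st
  end.

(* orientations of the strands at level l (after the first l events);
   a (1,1)-tangle starts with a single downward strand *)
Definition state (D : seq event) (l : nat) : seq bool :=
  foldl stepT [:: true] (take l D).

Definition width (D : seq event) (l : nat) : nat := size (state D l).

Definition event_ok (st : seq bool) (e : event) : bool :=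
  match e with
  | Xing k _ => [&& (k.+1 < size st)%N, nth false st k & nth false st k.+1]
  | Cap k _ => (k <= size st)%N
  | Cup k => (k.+1 < size st)%N && (nth false st k != nth false st k.+1)
  end.

(* D is a diagram of an oriented (1,1)-tangle all of whose crossings have
   both strands running downward, the open strand running downward from
   the top endpoint to the bottom endpoint. *)
Definition valid (D : seq event) : bool :=
  [forall l : 'I_(size D), event_ok (state D l) (nth ev0 D l)]
  && (state D (size D) == [:: true]).

(* strand segments: (level, position) *)
Definition seg (D : seq event) : finType :=
  {p : 'I_(size D).+1 * 'I_(size D).*2.+1 | (p.2 < width D p.1)%N}.

Definition lv (D : seq event) (s : seg D) : nat := (sval s).1.
Definition ps (D : seq event) (s : seg D) : nat := (sval s).2.

(* two segments are consecutive pieces of the same arc (no crossing in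
   between: passing an event not involving the strand, or going through a
   cap or a cup) *)
Definition arc_adj (D : seq event) (s t : seg D) : bool :=
  [|| (lv t == (lv s).+1) &&
      match nth ev0 D (lv s) with
      | Xing k _ => ((ps s < k)%N || (k.+1 < ps s)%N) && (ps t == ps s)
      | Cap k _ => ((ps s < k)%N && (ps t == ps s))
                   || ((k <= ps s)%N && (ps t == (ps s).+2))
      | Cup k => ((ps s < k)%N && (ps t == ps s))
                 || ((k.+1 < ps s)%N && (ps t == (ps s).-2))
      end,
      [&& lv t == lv s, (0 < lv s)%N &
       match nth ev0 D (lv s).-1 with
       | Cap k _ => (ps s == k) && (ps t == k.+1)
       | _ => false
       end]
    | [&& lv t == lv s, (lv s < size D)%N &
       match nth ev0 D (lv s) with
       | Cup k => (ps s == k) && (ps t == k.+1)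
       | _ => false
       end]].

(* two segments are consecutive pieces of the same strand (arcs, plus
   going straight through crossings) *)
Definition strand_adj (D : seq event) (s t : seg D) : bool :=
  arc_adj s t ||
  (lv t == (lv s).+1) &&
  match nth ev0 D (lv s) with
  | Xing k _ => ((ps s == k) && (ps t == k.+1)) || ((ps s == k.+1) && (ps t == k))
  | _ => false
  end.

Definition symc (T : Type) (r : rel T) : rel T := fun a b => r a b || r b a.

Definition same_arc (D : seq event) : rel (seg D) := connect (symc (@arc_adj D)).
Definition same_comp (D : seq event) : rel (seg D) := connect (symc (@strand_adj D)).

Definition is_top (D : seq event) (s : seg D) : bool := (lv s == 0%N) && (ps s == 0%N).

(* comp assigns to every segment the index (0-based) of its component:
   the map from components to 'I_n is a bijection and the open component
   gets index 0 (variable x_1). *)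
Definition comp_ok (n : nat) (D : seq event) (comp : {ffun seg D -> 'I_n}) : bool :=
  [&& [forall s, forall t, (comp s == comp t) == same_comp s t],
      [forall i : 'I_n, exists s, comp s == i] &
      [forall s, is_top s ==> (val (comp s) == 0%N)]].

Definition labAt (D : seq event) (r : nat) (lam : {ffun seg D -> 'I_r})
  (l p : nat) : int :=
  match [pick s : seg D | (lv s == l) && (ps s == p)] with
  | Some s => (val (lam s))%:Z
  | None => 0
  end.

Definition compAt (n : nat) (D : seq event) (comp : {ffun seg D -> 'I_n})
  (l p : nat) : nat :=
  match [pick s : seg D | (lv s == l) && (ps s == p)] with
  | Some s => val (comp s)
  | None => 0%N
  end.

Section Blocks.
Variable n : nat.
Local Notation q := (q n).
Local Notation x := (x n).
Local Notation z := (z n).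

Definition ind (b : bool) : Vn n := if b then 1 else 0.

(* crossing where strand of component i enters along a, leaves along c,
   strand of component j enters along b and leaves along d *)
Definition poscross (i j : nat) (a b c d : int) : Vn n :=
  ind ((a - c == d - b) && (c <= a) && (d >= b)) *
  (- x i) ^ (a - c) * q ^ ((c - a) * (a + b + 1) + 2 * c * d) *
  z i j * x i ^ (- d) * x j ^ (- c) *
  (poch (q ^ (2 * (a - 1)) * x i ^ (-2)) (q ^ (-2)) (a - c) *
   poch (q ^ (2 * (b + 1))) (q ^ 2) (a - c) /
   poch (q ^ (-2)) (q ^ (-2)) (a - c)).

Definition negcross (i j : nat) (a b c d : int) : Vn n :=
  ind ((a - c == d - b) && (c <= a) && (d >= b)) *
  (- x i) ^ (a - c) * q ^ ((c - a) * (a + b - 1) - 2 * a * b) *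
  (z i j)^-1 * x i ^ b * x j ^ a *
  (poch (q ^ (2 * (a - 1)) * x i ^ (-2)) (q ^ (-2)) (a - c) *
   poch (q ^ (2 * (b + 1))) (q ^ 2) (a - c) /
   poch (q ^ 2) (q ^ 2) (a - c)).

Definition dfac (r : nat) : Vn n :=
  (- x 0) ^ (r%:Z - 1) * q ^ (((r * r.+1) %/ 2)%:Z - 1) /
  poch (q ^ 4 * x 0 ^ 2) (q ^ 2) (r%:Z - 1).
End Blocks.

(* Weight of the event number l (between level l and level l+1).
   At a crossing the strand of component i is the over-strand.
   A cap (local maximum) corresponds to the evaluation V*⊗V -> C iff its
   left strand is oriented upward; a cup (local minimum) corresponds to the
   coevaluation C -> V⊗V* iff its left strand is oriented downward
   (downward strands carry V). *)
Definition ev_weight (n : nat) (D : seq event) (comp : {ffun seg D -> 'I_n})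
  (r : nat) (lam : {ffun seg D -> 'I_r}) (l : nat) : Vn n :=
  let lab := labAt lam in
  let cmp := compAt comp in
  match nth ev0 D l with
  | Xing k true =>
      poscross n (cmp l k.+1) (cmp l k)
        (lab l k.+1) (lab l k) (lab l.+1 k) (lab l.+1 k.+1)
  | Xing k false =>
      negcross n (cmp l k) (cmp l k.+1)
        (lab l k) (lab l k.+1) (lab l.+1 k.+1) (lab l.+1 k)
  | Cap k ld =>
      if ld then q n ^ (2 * lab l.+1 k * (r%:Z - 1)) * x n (cmp l.+1 k) ^ (1 - r%:Z)
      else 1
  | Cup k =>
      if nth false (state D l) k then 1
      else q n ^ (2 * lab l k * (1 - r%:Z)) * x n (cmp l k) ^ (r%:Z - 1)
  end.

Definition Gx (n : nat) (D : seq event) (comp : {ffun seg D -> 'I_n})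
  (r : nat) (lam : {ffun seg D -> 'I_r}) : Vn n :=
  dfac n r * ind n ((labAt lam 0 0 == 0) && (labAt lam (size D) 0 == 0)) *
  \prod_(l < size D) ev_weight comp lam l.

(* An arc labelling (a_1,..,a_m) in [0,r-1]^m is the same as a labelling
   of the segments that is constant along arcs. *)
Definition arc_labelling (D : seq event) (r : nat) (lam : {ffun seg D -> 'I_r}) : bool :=
  [forall s, forall t, same_arc s t ==> (lam s == lam t)].

Definition G (n : nat) (D : seq event) (comp : {ffun seg D -> 'I_n}) (r : nat) : Vn n :=
  \sum_(lam : {ffun seg D -> 'I_r} | arc_labelling lam) Gx comp lam.

(* Linking matrix of the closure L (blackboard framing): C_ij is the sum of
   the signs of the crossings where component i passes over component j;
   C_ii is the writhe of component i, i.e. its blackboard framing. *)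
Definition linking (n : nat) (D : seq event) (comp : {ffun seg D -> 'I_n})
  (i j : nat) : int :=
  \sum_(l < size D)
    match nth ev0 D l with
    | Xing k true =>
        if (compAt comp l k.+1 == i) && (compAt comp l k == j) then 1 else 0
    | Xing k false =>
        if (compAt comp l k == i) && (compAt comp l k.+1 == j) then -1 else 0
    | _ => 0
    end.

(* Main.v *)
Require Import Defs.
From HB Require Import structures.
From mathcomp Require Import all_boot all_algebra.
From mathcomp Require Import Rstruct complex.
From mathcomp Require Import mpoly.
From mathcomp Require Import fraction.
From mathcomp Require Import ring zify.
Import GRing.Theory Num.Theory.
Local Open Scope ring_scope.

Section Lau.
Variable n : nat.
Local Notation MP := {mpoly CC[nvars n]}.

Lemma inqx_add (P1 P2 : MP) : (@in_qx_polys n) P1 -> (@in_qx_polys n) P2 -> (@in_qx_polys n) (P1 + P2).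
Proof.
move=> H1 H2 m /msuppD_le; rewrite mem_cat => /orP [] hm k.
  exact: H1. exact: H2.
Qed.

Lemma inqx_mul (P1 P2 : MP) : (@in_qx_polys n) P1 -> (@in_qx_polys n) P2 -> (@in_qx_polys n) (P1 * P2).
Proof.
move=> H1 H2 m /msuppM_le /allpairsP [[m1 m2] /= [h1 h2 ->]] k.
rewrite mnmDE; have := H1 _ h1 k; have := H2 _ h2 k.
case: ifP => _.
  by rewrite oddD => /negbTE -> /negbTE ->.
by move=> /eqP -> /eqP ->.
Qed.

Lemma inqx_opp (P : MP) : (@in_qx_polys n) P -> (@in_qx_polys n) (- P).
Proof. by move=> H m; rewrite (perm_mem (msuppN _)); exact: H. Qed.

Lemma inqx_C (c : CC) : (@in_qx_polys n) (c%:MP : MP).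
Proof.
move=> m; rewrite msuppC; case: (c == 0) => //; rewrite mem_seq1 => /eqP -> k.
by rewrite mnm0E; case: ifP.
Qed.

Lemma inqx_X2 (k : nat) : (k < n.+1)%N ->
  (@in_qx_polys n) (('X_(inord k) : MP) ^+ 2).
Proof.
move=> hk m; rewrite mpolyXn msuppX mem_seq1 => /eqP -> k'.
rewrite mulmnE mnm1E.
case: ifP => h.
  by case: (_ == _).
have -> : (@inord (n + n * n) k == k') = false => //.
apply/negbTE; apply/eqP => e; move: h; rewrite -e inordK //.
  by rewrite hk.
rewrite /nvars; lia.
Qed.

Definition LR (f : Vn n) := exists P : MP, (@in_qx_polys n) P /\ f = FracField.tofrac P.

Lemma LR_add f g : LR f -> LR g -> LR (f + g).
Proof. by move=> [P [hP ->]] [Q [hQ ->]]; exists (P + Q); rewrite tofracD; split => //; exact: inqx_add. Qed.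
Lemma LR_mul f g : LR f -> LR g -> LR (f * g).
Proof. by move=> [P [hP ->]] [Q [hQ ->]]; exists (P * Q); rewrite tofracM; split => //; exact: inqx_mul. Qed.
Lemma LR_opp f : LR f -> LR (- f).
Proof. by move=> [P [hP ->]]; exists (- P); rewrite tofracN; split => //; exact: inqx_opp. Qed.
Lemma LR_1 : LR 1.
Proof. exists 1; split; last by rewrite tofrac1. exact: (inqx_C 1). Qed.
Lemma LR_0 : LR 0.
Proof. exists 0; split; last by rewrite tofrac0. exact: (inqx_C 0). Qed.
Lemma LR_exp f k : LR f -> LR (f ^+ k).
Proof. move=> h; elim: k => [|k ih]; first exact: LR_1. by rewrite exprS; apply: LR_mul. Qed.
Lemma LR_prod (I : Type) (s : seq I) (P : pred I) (F : I -> Vn n) :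
  (forall i, P i -> LR (F i)) -> LR (\prod_(i <- s | P i) F i).
Proof. move=> h; apply: big_ind => //; [exact: LR_1 | exact: LR_mul]. Qed.

Lemma LR_var2 k : (k < n.+1)%N -> LR (var n k ^+ 2).
Proof.
move=> hk; exists (('X_(inord k) : MP) ^+ 2); split; first exact: inqx_X2.
by rewrite /var tofracXn.
Qed.

Lemma LR_q : LR (q n).
Proof. exact: LR_var2. Qed.
Lemma LR_x i : (i < n)%N -> LR (x n i).
Proof. by move=> hi; apply: LR_var2. Qed.

Lemma var_neq0 k : var n k != 0.
Proof.
rewrite /var tofrac_eq0 -msupp_eq0 msuppX //.
Qed.

Lemma q_neq0 : q n != 0.
Proof. by rewrite /q /qh expf_neq0 // var_neq0. Qed.
Lemma x_neq0 i : x n i != 0.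
Proof. by rewrite /x /xh expf_neq0 // var_neq0. Qed.

Definition uu : Vn n := q n * \prod_(i < n) x n i.
Lemma uu_neq0 : uu != 0.
Proof.
rewrite /uu mulf_neq0 ?q_neq0 //; apply/prodf_neq0 => i _; exact: x_neq0.
Qed.
Lemma LR_uu : LR uu.
Proof. apply: LR_mul; first exact: LR_q. apply: LR_prod => i _; exact: LR_x. Qed.

Definition Lau (f : Vn n) := exists e, LR (f * uu ^+ e).

Lemma Lau_laurent f : Lau f -> laurent f.
Proof.
move=> [e [P [hP hf]]]; exists P, e; split => //.
rewrite -hf mulfK //; exact: expf_neq0 uu_neq0.
Qed.

Lemma LR_Lau f : LR f -> Lau f.
Proof. by move=> h; exists 0%N; rewrite expr0 mulr1. Qed.

Lemma Lau_add f g : Lau f -> Lau g -> Lau (f + g).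
Proof.
move=> [e1 h1] [e2 h2]; exists (e1 + e2)%N.
rewrite mulrDl exprD; apply: LR_add.
  by rewrite mulrA; apply: LR_mul => //; apply: LR_exp; exact: LR_uu.
by rewrite (mulrC (uu ^+ e1)) mulrA; apply: LR_mul => //; apply: LR_exp; exact: LR_uu.
Qed.
Lemma Lau_mul f g : Lau f -> Lau g -> Lau (f * g).
Proof.
move=> [e1 h1] [e2 h2]; exists (e1 + e2)%N.
have -> : f * g * uu ^+ (e1 + e2) = (f * uu ^+ e1) * (g * uu ^+ e2) by rewrite exprD; ring.
exact: LR_mul.
Qed.
Lemma Lau_1 : Lau 1. Proof. exact: LR_Lau LR_1. Qed.
Lemma Lau_0 : Lau 0. Proof. exact: LR_Lau LR_0. Qed.
Lemma Lau_opp f : Lau f -> Lau (- f).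
Proof. move=> h; rewrite -mulN1r; apply: Lau_mul => //; apply: LR_Lau; apply: LR_opp; exact: LR_1. Qed.
Lemma Lau_sub f g : Lau f -> Lau g -> Lau (f - g).
Proof. by move=> h1 h2; apply: Lau_add => //; apply: Lau_opp. Qed.
Lemma Lau_exp f k : Lau f -> Lau (f ^+ k).
Proof. move=> h; elim: k => [|k ih]; first exact: Lau_1. by rewrite exprS; apply: Lau_mul. Qed.
Lemma Lau_prod (I : Type) (s : seq I) (P : pred I) (F : I -> Vn n) :
  (forall i, P i -> Lau (F i)) -> Lau (\prod_(i <- s | P i) F i).
Proof. move=> h; apply: big_ind => //; [exact: Lau_1 | exact: Lau_mul]. Qed.
Lemma Lau_sum (I : Type) (s : seq I) (P : pred I) (F : I -> Vn n) :
  (forall i, P i -> Lau (F i)) -> Lau (\sum_(i <- s | P i) F i).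
Proof. move=> h; apply: big_ind => //; [exact: Lau_0 | exact: Lau_add]. Qed.
Lemma Lau_exprz f (m : int) : Lau f -> Lau f^-1 -> Lau (f ^ m).
Proof.
move=> h1 h2; case: m => k /=; first exact: Lau_exp.
have -> : f ^ Negz k = (f^-1) ^+ k.+1 by rewrite exprVn.
exact: Lau_exp.
Qed.

Lemma Lau_q : Lau (q n). Proof. exact: LR_Lau LR_q. Qed.
Lemma Lau_qV : Lau (q n)^-1.
Proof.
exists 1%N; rewrite expr1 /uu mulrA.  have e := mulVf (@q_neq0). rewrite e mul1r.
apply: LR_prod => i _; exact: LR_x.
Qed.
Lemma Lau_x i : (i < n)%N -> Lau (x n i). Proof. by move=> h; apply: LR_Lau; apply: LR_x. Qed.
Lemma Lau_xV i : (i < n)%N -> Lau (x n i)^-1.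
Proof.
move=> hi; exists 1%N; rewrite expr1 /uu (bigD1 (Ordinal hi)) //=.
have -> : (x n i)^-1 * (q n * (x n i * \prod_(j < n | j != Ordinal hi) x n j))
   = q n * \prod_(j < n | j != Ordinal hi) x n j.
  by rewrite mulrCA (mulKf (x_neq0 i)).
apply: LR_mul; first exact: LR_q. apply: LR_prod => j _; exact: LR_x.
Qed.
Lemma Lau_qz (m : int) : Lau (q n ^ m).
Proof. exact: Lau_exprz Lau_q Lau_qV. Qed.
Lemma Lau_xz i (m : int) : (i < n)%N -> Lau (x n i ^ m).
Proof. by move=> h; apply: Lau_exprz; [exact: Lau_x | exact: Lau_xV]. Qed.
Lemma Lau_Nxz i (m : int) : (i < n)%N -> Lau ((- x n i) ^ m).
Proof.
move=> h; apply: Lau_exprz; first by apply: Lau_opp; exact: Lau_x.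
by rewrite invrN; apply: Lau_opp; exact: Lau_xV.
Qed.

End Lau.
Arguments Lau {n}.
Arguments LR {n}.
Arguments uu {n}.

Section QBin.
Variable n : nat.
Variable Q : Vn n.
Hypothesis hQ : Lau Q.

Definition NN b k : Vn n := \prod_(j < k) (1 - Q ^+ (b + j).+1).
Definition DD k : Vn n := \prod_(j < k) (1 - Q ^+ j.+1).

Lemma qbin k : forall b, exists B, Lau B /\ NN b k = DD k * B.
Proof.
elim: k => [|k IHk] b.
  by exists 1; split; [exact: Lau_1 | rewrite /NN /DD !big_ord0 mulr1].
elim: b => [|b IHb].
  exists 1; split; first exact: Lau_1.
  by rewrite mulr1 /NN /DD; apply: eq_bigr => j _; rewrite add0n.
have [B1 [h1 e1]] := IHk b.+1.
have [B2 [h2 e2]] := IHb.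
exists (B1 + Q ^+ k.+1 * B2); split.
  by apply: Lau_add => //; apply: Lau_mul => //; apply: Lau_exp.
have r1 : NN b.+1 k.+1 = NN b.+1 k * (1 - Q ^+ (b.+1 + k).+1) by rewrite /NN big_ord_recr.
have r2 : NN b k.+1 = (1 - Q ^+ (b.+1)) * NN b.+1 k.
  rewrite /NN big_ord_recl addn0; congr (_ * _); apply: eq_bigr => j _.
  by rewrite /= addnS addSn.
have r3 : DD k.+1 = DD k * (1 - Q ^+ k.+1) by rewrite /DD big_ord_recr.
have r4 : NN b.+1 k.+1 = (1 - Q ^+ k.+1) * NN b.+1 k + Q ^+ k.+1 * NN b k.+1.
  rewrite r1 r2 (_ : (b.+1 + k).+1 = k.+1 + b.+1)%N; last by lia.
  rewrite exprD; ring.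
rewrite r4 e2 e1 r3; ring.
Qed.

Lemma qbin_div b k : Lau (NN b k / DD k).
Proof.
have [B [hB ->]] := qbin k b.
have [->|nz] := eqVneq (DD k) 0; first by rewrite mul0r mul0r; exact: Lau_0.
by rewrite mulrC (mulKf nz).
Qed.
End QBin.
Arguments NN {n}.
Arguments DD {n}.

Lemma Qpow n (bn j : nat) :
  q n ^ (2 * (Posz bn + 1)) * (q n ^ 2) ^+ j = (q n ^+ 2) ^+ (bn + j).+1.
Proof.
have -> : (2 * (Posz bn + 1) = Posz (2 * bn.+1))%R by lia.
have -> : q n ^ (Posz (2 * bn.+1)) = (q n ^+ 2) ^+ bn.+1 by rewrite -exprM.
have -> : q n ^ 2 = q n ^+ 2 by [].
by rewrite -exprD addSn.
Qed.

Lemma poch2E n (b : int) k : 0 <= b ->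
  exists bn, poch (q n ^ (2 * (b + 1))) (q n ^ 2) (Posz k) = NN (q n ^+ 2) bn k.
Proof.
case: b => [bn|bn] // _; exists bn; rewrite /poch /NN; apply: eq_bigr => j _.
by rewrite Qpow.
Qed.

Lemma poch3E n k : poch (q n ^ 2) (q n ^ 2) (Posz k) = DD (q n ^+ 2) k.
Proof.
rewrite /poch /DD; apply: eq_bigr => j _.
have -> : q n ^ 2 = q n ^+ 2 by [].
by rewrite -exprS.
Qed.

Lemma poch3E' n k : poch (q n ^ (-2)) (q n ^ (-2)) (Posz k) =
  (\prod_(j < k) (- (q n ^+ 2) ^+ j.+1))^-1 * DD (q n ^+ 2) k.
Proof.
rewrite -prodfV /DD -big_split /=; apply: eq_bigr => j _ /=.
have -> : q n ^ (-2) = (q n ^+ 2)^-1 by [].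
rewrite -exprS exprVn.
have nz : (q n ^+ 2) ^+ j.+1 != 0 by apply: expf_neq0; apply: expf_neq0; exact: q_neq0.
move: nz; set w := (q n ^+ 2) ^+ j.+1 => nz.
by rewrite mulrBr mulr1 invrN mulNr (mulVf nz) opprK addrC.
Qed.

Lemma LauQ n : Lau (q n ^+ 2). Proof. apply: Lau_exp; exact: Lau_q. Qed.

Lemma pochB_neg n (b : int) k : 0 <= b ->
  Lau (poch (q n ^ (2 * (b + 1))) (q n ^ 2) (Posz k) / poch (q n ^ 2) (q n ^ 2) (Posz k)).
Proof.
move=> hb; have [bn ->] := poch2E n b k hb; rewrite poch3E. exact: (@qbin_div n _ (LauQ n)).
Qed.

Lemma pochB_pos n (b : int) k : 0 <= b ->
  Lau (poch (q n ^ (2 * (b + 1))) (q n ^ 2) (Posz k) / poch (q n ^ (-2)) (q n ^ (-2)) (Posz k)).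
Proof.
move=> hb; have [bn ->] := poch2E n b k hb; rewrite poch3E' invfM invrK mulrA mulrAC.
apply: Lau_mul; first exact: (@qbin_div n _ (LauQ n)).
apply: Lau_prod => j _; apply: Lau_opp; apply: Lau_exp; exact: LauQ.
Qed.

Lemma z_neq0 n i j : z n i j != 0.
Proof. exact: var_neq0. Qed.

Lemma Lau_ind n b : Lau (ind n b).
Proof. by case: b; [exact: Lau_1 | exact: Lau_0]. Qed.

Lemma Lau_poch1 n i (a : int) k : (i < n)%N ->
  Lau (poch (q n ^ (2 * (a - 1)) * x n i ^ (-2)) (q n ^ (-2)) (Posz k)).
Proof.
move=> hi; rewrite /poch; apply: Lau_prod => t _; apply: Lau_sub; first exact: Lau_1.
apply: Lau_mul; first (apply: Lau_mul; [exact: Lau_qz | exact: Lau_xz]).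
apply: Lau_exp; exact: Lau_qz.
Qed.

Lemma Lau_poscross n i j a b c d : (i < n)%N -> (j < n)%N -> 0 <= b ->
  Lau (poscross n i j a b c d / z n i j).
Proof.
move=> hi hj hb.
set W := (ind n ((a - c == d - b) && (c <= a) && (d >= b)) * (- x n i) ^ (a - c) *
  q n ^ ((c - a) * (a + b + 1) + 2 * c * d) * x n i ^ (- d) * x n j ^ (- c) *
  (poch (q n ^ (2 * (a - 1)) * x n i ^ (-2)) (q n ^ (-2)) (a - c) *
   poch (q n ^ (2 * (b + 1))) (q n ^ 2) (a - c) /
   poch (q n ^ (-2)) (q n ^ (-2)) (a - c))).
have -> : poscross n i j a b c d = z n i j * W by rewrite /poscross /W; ring.
rewrite mulrC (mulKf (z_neq0 n i j)) /W /ind.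
case: ifP => [/andP [/andP [_ hca] _] | _]; last by rewrite !mul0r; exact: Lau_0.
have [k hk] : exists k : nat, a - c = k by exists `|a - c|%N; rewrite gez0_abs // subr_ge0.
rewrite hk mul1r.
apply: Lau_mul; last first.
  rewrite -mulrA; apply: Lau_mul; first exact: Lau_poch1.
  exact: pochB_pos.
apply: Lau_mul; last exact: Lau_xz.
apply: Lau_mul; last exact: Lau_xz.
apply: Lau_mul; [exact: Lau_Nxz | exact: Lau_qz].
Qed.

Lemma Lau_negcross n i j a b c d : (i < n)%N -> (j < n)%N -> 0 <= b ->
  Lau (negcross n i j a b c d / (z n i j)^-1).
Proof.
move=> hi hj hb.
set W := (ind n ((a - c == d - b) && (c <= a) && (d >= b)) * (- x n i) ^ (a - c) *
  q n ^ ((c - a) * (a + b - 1) - 2 * a * b) * x n i ^ b * x n j ^ a *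
  (poch (q n ^ (2 * (a - 1)) * x n i ^ (-2)) (q n ^ (-2)) (a - c) *
   poch (q n ^ (2 * (b + 1))) (q n ^ 2) (a - c) /
   poch (q n ^ 2) (q n ^ 2) (a - c))).
have -> : negcross n i j a b c d = (z n i j)^-1 * W by rewrite /negcross /W; ring.
rewrite mulrC (mulKf (invr_neq0 (z_neq0 n i j))) /W /ind.
case: ifP => [/andP [/andP [_ hca] _] | _]; last by rewrite !mul0r; exact: Lau_0.
have [k hk] : exists k : nat, a - c = k by exists `|a - c|%N; rewrite gez0_abs // subr_ge0.
rewrite hk mul1r.
apply: Lau_mul; last first.
  rewrite -mulrA; apply: Lau_mul; first exact: Lau_poch1.
  exact: pochB_neg.
apply: Lau_mul; last exact: Lau_xz.
apply: Lau_mul; last exact: Lau_xz.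
apply: Lau_mul; [exact: Lau_Nxz | exact: Lau_qz].
Qed.

Lemma compAt_lt n (D : seq event) (comp : {ffun seg D -> 'I_n}) l p :
  (0 < n)%N -> (compAt comp l p < n)%N.
Proof. move=> hn; rewrite /compAt; case: pickP => [s _|_] //; exact: ltn_ord. Qed.

Lemma labAt_ge0 (D : seq event) r (lam : {ffun seg D -> 'I_r}) l p : 0 <= labAt lam l p.
Proof. by rewrite /labAt; case: pickP. Qed.

Definition zfac n (D : seq event) (comp : {ffun seg D -> 'I_n}) l : Vn n :=
  match nth ev0 D l with
  | Xing k true => z n (compAt comp l k.+1) (compAt comp l k)
  | Xing k false => (z n (compAt comp l k) (compAt comp l k.+1))^-1
  | _ => 1
  end.
Arguments zfac {n D}.

Lemma zfac_neq0 n (D : seq event) (comp : {ffun seg D -> 'I_n}) l : zfac comp l != 0.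
Proof.
rewrite /zfac; case: (nth ev0 D l) => [k [] | k ld | k] //; rewrite ?oner_neq0 //.
  exact: z_neq0.
rewrite invr_neq0 //; exact: z_neq0.
Qed.

Lemma ev_split n D (comp : {ffun seg D -> 'I_n}) r (lam : {ffun seg D -> 'I_r}) l :
  (0 < n)%N -> Lau (ev_weight comp lam l / zfac comp l).
Proof.
move=> hn; rewrite /ev_weight /zfac /=.
case: (nth ev0 D l) => [k [] | k ld | k].
- apply: Lau_poscross; [exact: compAt_lt | exact: compAt_lt | exact: labAt_ge0].
- apply: Lau_negcross; [exact: compAt_lt | exact: compAt_lt | exact: labAt_ge0].
- rewrite divr1; case: ld; last exact: Lau_1.
  apply: Lau_mul; [exact: Lau_qz | apply: Lau_xz; exact: compAt_lt].
- rewrite divr1; case: ifP => _; first exact: Lau_1.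
  apply: Lau_mul; [exact: Lau_qz | apply: Lau_xz; exact: compAt_lt].
Qed.

Lemma pick2 n (F : nat -> nat -> Vn n) (a0 b0 : nat) (e : int) :
  (a0 < n)%N -> (b0 < n)%N ->
  \prod_(i < n) \prod_(j < n) F i j ^ (if (a0 == i) && (b0 == j) then e else 0)
  = F a0 b0 ^ e.
Proof.
move=> ha hb.
rewrite (bigD1 (Ordinal ha)) //=.
have -> : \prod_(i < n | i != Ordinal ha) \prod_(j < n)
     F i j ^ (if (a0 == i) && (b0 == j) then e else 0) = 1.
  apply: big1 => i hi; apply: big1 => j _.
  have -> : (a0 == i) = false.
    apply/negbTE; apply: contra hi => /eqP ei; apply/eqP/val_inj => /=; by rewrite ei.
  exact: expr0z.
rewrite mulr1 (bigD1 (Ordinal hb)) //= !eqxx /=.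
have -> : \prod_(j < n | j != Ordinal hb)
     F a0 j ^ (if (b0 == j) then e else 0) = 1.
  apply: big1 => j hj.
  have -> : (b0 == j) = false.
    apply/negbTE; apply: contra hj => /eqP ej; apply/eqP/val_inj => /=; by rewrite ej.
  exact: expr0z.
by rewrite mulr1.
Qed.

Lemma exprz_sum n (y : Vn n) m (c : 'I_m -> int) : y != 0 ->
  y ^ (\sum_(l < m) c l) = \prod_(l < m) y ^ c l.
Proof.
move=> hy; apply: (big_rec2 (fun s p => y ^ s = p)); first exact: expr0z.
by move=> l a b _ <-; rewrite exprzDr // unitfE.
Qed.

Lemma prodZ n D (comp : {ffun seg D -> 'I_n}) : (0 < n)%N ->
  \prod_(i < n) \prod_(j < n) z n i j ^ linking comp i j =
  \prod_(l < size D) zfac comp l.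
Proof.
move=> hn; rewrite /linking.
under eq_bigr => i _ do under eq_bigr => j _ do rewrite (@exprz_sum n _ _ _ (z_neq0 n i j)).
under eq_bigr => i _ do rewrite exchange_big.
rewrite exchange_big; apply: eq_bigr => l _; rewrite /zfac.
case: (nth ev0 D l) => [k [] | k ld | k].
- by rewrite (@pick2 n (fun i j => z n i j)) ?expr1z // compAt_lt.
- by rewrite (@pick2 n (fun i j => z n i j)) ?exprN1 // compAt_lt.
- by apply: big1 => i _; apply: big1 => j _; exact: expr0z.
- by apply: big1 => i _; apply: big1 => j _; exact: expr0z.
Qed.

Theorem proposition2p2 (n : nat) (D : seq event) (comp : {ffun seg D -> 'I_n})
  (r : nat) :
  valid D -> comp_ok comp -> (1 <= r)%N ->
  exists f : Vn n,
    laurent f /\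
    G comp r =
      (poch (q n ^+ 4 * x n 0 ^+ 2) (q n ^+ 2) (r%:Z - 1))^-1 *
      (\prod_(i < n) \prod_(j < n) z n i j ^ linking comp i j) * f.
Proof.
move=> hv hc hr.
have hn : (0 < n)%N.
  have h0 : ((ord0 : 'I_(size D).*2.+1) < width D (ord0 : 'I_(size D).+1))%N.
    by rewrite /width /state take0.
  exact: (leq_ltn_trans (leq0n _) (ltn_ord (comp (exist _ (ord0, ord0) h0 : seg D)))).
exists (\sum_(lam : {ffun seg D -> 'I_r} | arc_labelling lam)
  ((- x n 0) ^ (r%:Z - 1) * q n ^ (((r * r.+1) %/ 2)%:Z - 1) *
   ind n ((labAt lam 0 0 == 0) && (labAt lam (size D) 0 == 0)) *
   \prod_(l < size D) (ev_weight comp lam l / zfac comp l))).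
split.
  apply: Lau_laurent; apply: Lau_sum => lam _.
  apply: Lau_mul; last by apply: Lau_prod => l _; exact: ev_split.
  apply: Lau_mul; last exact: Lau_ind.
  apply: Lau_mul; [exact: Lau_Nxz | exact: Lau_qz].
rewrite /G mulr_sumr; apply: eq_bigr => lam _; rewrite /Gx.
have e1 : \prod_(l < size D) ev_weight comp lam l =
   (\prod_(i < n) \prod_(j < n) z n i j ^ linking comp i j) *
   \prod_(l < size D) (ev_weight comp lam l / zfac comp l).
  rewrite prodZ // -big_split; apply: eq_bigr => l _.
  by rewrite /= mulrCA (mulfV (zfac_neq0 n D comp l)) mulr1.
have e2 : dfac n r = (poch (q n ^+ 4 * x n 0 ^+ 2) (q n ^+ 2) (r%:Z - 1))^-1 *
   ((- x n 0) ^ (r%:Z - 1) * q n ^ (((r * r.+1) %/ 2)%:Z - 1)).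
  by rewrite /dfac mulrC.
rewrite e1 e2; ring.
Qed.
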